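(* For all positive integers $m$ and $n$, $$\sum_{k=1}^nH_k\sum_{j=m}^{n-k+1}\binom{n-k}{j-1}\frac{s(j,m)}{j!}=\frac{1}{m!}H_{n+1}(m+1).$$ In particular, $\sum_{k=1}^n\frac{H_k}{n-k+1}=H_{n+1}^2-H_{n+1}^{(2)}$.
   Context: For integers $m\ge 1$, $n\ge 0$, the multiple harmonic-like numbers are $H_n(m)=\sum_{1\le k_1+k_2+\cdots+k_m\le n}\frac{1}{k_1k_2\cdots k_m}$ (sum over positive integers $k_1,\dots,k_m$), with $H_n(0)=1$ for $n\ge 0$ and $H_0(m)=0$ for $m\ge1$. $H_n=\sum_{k=1}^n\frac1k$, $H_n^{(2)}=\sum_{k=1}^n\frac1{k^2}$. The (signed) Stirling numbers of the first kind $s(n,k)$ are defined by $\sum_{n\ge k}s(n,k)\frac{z^n}{n!}=\frac{\ln^k(1+z)}{k!}$, with $s(n,k)=0$ for $n<k$. *)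

(* Defs.v *)
From HB Require Import structures.
From mathcomp Require Import all_boot all_order all_algebra.
Set Implicit Arguments. Unset Strict Implicit. Unset Printing Implicit Defensive.
Import Order.TTheory GRing.Theory Num.Theory.
Local Open Scope ring_scope.

Definition harm (n : nat) : rat := \sum_(1 <= k < n.+1) (k%:R)^-1.

Definition harm2 (n : nat) : rat := \sum_(1 <= k < n.+1) ((k%:R) ^+ 2)^-1.

(* Tuples (k_1,...,k_m) are finite functions 'I_m -> 'I_(n+1) (every
   admissible k_i is <= n).  For m = 0 the only tuple is empty, giving 1;
   for n = 0, m >= 1 no tuple qualifies, giving 0 -- matching the paper's
   conventions. *)
Definition mharm (n m : nat) : rat :=
  \sum_(k : {ffun 'I_m -> 'I_n.+1} |
          [forall i, 0 < (k i : nat)]%N && (\sum_i (k i : nat) <= n)%N)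
     (\prod_i ((k i : nat)%:R : rat))^-1.

(* Signed Stirling numbers of the first kind s(n,k), via the standard
   recurrence s(n+1,k) = s(n,k-1) - n s(n,k), s(0,0)=1, s(0,k+1)=0,
   equivalent to the generating function sum_n s(n,k) z^n/n! = ln^k(1+z)/k!. *)
Fixpoint stirling1 (n k : nat) : int :=
  match n, k with
  | 0, 0 => 1
  | 0, _.+1 => 0
  | n'.+1, 0 => - (n'%:Z) * stirling1 n' 0
  | n'.+1, k'.+1 => stirling1 n' k' - (n'%:Z) * stirling1 n' k
  end.

(* Main.v *)
Require Import Defs.
From HB Require Import structures.
From mathcomp Require Import all_boot all_order all_algebra.
Import Order.TTheory GRing.Theory Num.Theory.
Local Open Scope ring_scope.
From mathcomp Require Import zify ring lra.

Definition SS (N n m : nat) : rat :=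
  \sum_(k : {ffun 'I_m -> 'I_N} |
          [forall i, 0 < (k i : nat)]%N && (\sum_i (k i : nat) <= n)%N)
     (\prod_i ((k i : nat)%:R : rat))^-1.

Definition phi N m (p : 'I_N * {ffun 'I_m -> 'I_N}) : {ffun 'I_m.+1 -> 'I_N} :=
  [ffun i => if unlift ord0 i is Some j then p.2 j else p.1].
Definition psi N m (f : {ffun 'I_m.+1 -> 'I_N}) : 'I_N * {ffun 'I_m -> 'I_N} :=
  (f ord0, [ffun j => f (lift ord0 j)]).

Lemma phiK N m : cancel (@phi N m) (@psi N m).
Proof.
case=> a k; rewrite /psi /phi /= ffunE unlift_none; congr pair.
by apply/ffunP=> j; rewrite !ffunE liftK.
Qed.
Lemma psiK N m : cancel (@psi N m) (@phi N m).
Proof.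
move=> f; apply/ffunP=> i; rewrite /psi /phi ffunE /=.
by case: unliftP => [j ->|->]; rewrite ?ffunE.
Qed.

Lemma phi_sum N m a k : (\sum_i (@phi N m (a,k) i : nat) = a + \sum_j (k j : nat))%N.
Proof.
rewrite big_ord_recl /phi ffunE unlift_none; congr addn.
by apply: eq_bigr => j _; rewrite ffunE liftK.
Qed.
Lemma phi_prod N m a k : (\prod_i ((@phi N m (a,k) i : nat)%:R : rat)) = a%:R * \prod_j ((k j : nat)%:R).
Proof.
rewrite big_ord_recl /phi ffunE unlift_none; congr (_ * _).
by apply: eq_bigr => j _; rewrite ffunE liftK.
Qed.
Lemma phi_pos N m a k : [forall i, 0 < (@phi N m (a,k) i : nat)]%N = (0 < a)%N && [forall j, 0 < (k j : nat)]%N.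
Proof.
apply/forallP/andP.
  move=> H; split; first by have := H ord0; rewrite /phi ffunE unlift_none.
  by apply/forallP => j; have := H (lift ord0 j); rewrite /phi ffunE liftK.
case=> Ha /forallP Hk i; rewrite /phi ffunE.
by case: unliftP => [j _|_] /=; [apply: Hk|].
Qed.

Lemma SS_rec N n m : SS N n m.+1 =
  \sum_(a : 'I_N | (0 < a <= n)%N) (a%:R)^-1 * SS N (n - a) m.
Proof.
rewrite /SS (reindex (@phi N m)); last first.
  by exists (@psi N m) => x _; [apply: phiK | apply: psiK].
under [in RHS]eq_bigr do rewrite big_distrr; rewrite pair_big_dep /=.
apply: eq_big => [[a k]|[a k] _] /=.
  rewrite phi_pos phi_sum.
  case: (posnP a) => [->|Ha] //=.
  case: (leqP a n) => Han /=.
    by rewrite leq_subRL // andbC.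
  case: [forall j, _] => //=; apply/negbTE; rewrite -ltnNge.
  exact: (leq_trans Han (leq_addr _ _)).
by rewrite phi_prod invfM.
Qed.

Fixpoint hh (m n : nat) : rat :=
  if m is m'.+1 then \sum_(i < n) hh m' (n - i.+1) / (i.+1)%:R else 1.

Lemma SS0 N n : SS N n 0 = 1.
Proof.
rewrite /SS (eq_bigl xpredT); last first.
  by move=> k; apply/andP; split; [apply/forallP => -[] | rewrite big_ord0].
rewrite (eq_bigr (fun _ => 1)); last by move=> k _; rewrite big_ord0 invr1.
by rewrite sumr_const card_ffun !card_ord expn0.
Qed.

Lemma sum_ordN N n (G : nat -> rat) : (n < N)%N ->
  \sum_(a : 'I_N | (0 < a <= n)%N) G a = \sum_(i < n) G i.+1.
Proof.
move=> nN.
rewrite -(big_mkord xpredT (fun i => G i.+1)).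
rewrite -(big_add1 _ _ 0 n.+1 xpredT G).
rewrite (big_nat_widen _ _ _ _ _ nN) big_geq_mkord.
by apply: eq_bigl => a /=; rewrite andbC ltnS.
Qed.

Lemma SS_hh m : forall N n, (n < N)%N -> SS N n m = hh m n.
Proof.
elim: m => [|m IH] N n nN; first by rewrite SS0.
rewrite SS_rec /=.
rewrite (eq_bigr (fun a : 'I_N => (a : nat)%:R^-1 * hh m (n - a))); last first.
  by move=> a /andP[_ an]; rewrite IH // (leq_ltn_trans (leq_subr _ _) nN).
rewrite (@sum_ordN N n (fun a => a%:R^-1 * hh m (n - a))) //.
by apply: eq_bigr => i _; rewrite mulrC.
Qed.

Lemma mharm_hh n m : SS n.+1 n m = hh m n.
Proof. exact: SS_hh. Qed.

Lemma hhS m n : hh m.+1 n = \sum_(i < n) hh m (n - i.+1) / (i.+1)%:R.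
Proof. by []. Qed.
Arguments hh : simpl never.

Definition dd m t := if t is t'.+1 then hh m t - hh m t' else hh m 0.

Lemma hh0 n : hh 0 n = 1. Proof. by rewrite /hh. Qed.
Lemma hhS0 m : hh m.+1 0 = 0. Proof. by rewrite hhS big_ord0. Qed.

Lemma hh_sum m n : hh m n = \sum_(t < n.+1) dd m t.
Proof.
elim: n => [|n IH]; first by rewrite big_ord1.
by rewrite big_ord_recr /= -IH addrC subrK.
Qed.

Lemma dd_rec m n : dd m.+1 n.+1 = \sum_(i < n.+1) dd m (n - i) / i.+1%:R.
Proof.
rewrite [LHS]/= !hhS [in RHS]big_ord_recr [X in X - _]big_ord_recr /= !subnn.
rewrite [in RHS](eq_bigr (fun i : 'I_n => (hh m (n - i) - hh m (n - i.+1)) / i.+1%:R)); last first.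
  by move=> i _; rewrite -(subnSK (ltn_ord i)).
under [X in X + _ - _]eq_bigr do rewrite subSS.
under [in RHS]eq_bigr do rewrite mulrBl.
rewrite sumrB /=.
ring.
Qed.

Lemma dd0S t : dd 0 t.+1 = 0. Proof. by rewrite /= subrr. Qed.
Lemma dd00 : dd 0 0 = 1. Proof. by []. Qed.

Lemma sum_rev (F : nat -> rat) M : \sum_(i < M.+1) F (M - i)%N = \sum_(t < M.+1) F t.
Proof.
rewrite [RHS](reindex_inj rev_ord_inj) /=.
by apply: eq_bigr => i _; rewrite subSS.
Qed.

Lemma deriv m : forall M, (M.+1)%:R * dd m.+1 M.+1 = (m.+1)%:R * hh m M.
Proof.
elim: m => [|m IH] M.
  rewrite dd_rec big_ord_recr /= subnn dd00 big1 ?add0r; last first.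
    by move=> i _; rewrite -(subnSK (ltn_ord i)) dd0S mul0r.
  by rewrite mul1r mulr1 mulfV // pnatr_eq0.
rewrite dd_rec mulr_sumr.
have E : forall i : 'I_M.+1, M.+1%:R * (dd m.+1 (M - i) / i.+1%:R) =
   dd m.+1 (M - i) + (M - i)%N%:R * dd m.+1 (M - i) / i.+1%:R.
  move=> i; have iM : (i <= M)%N by rewrite -ltnS.
  rewrite natrB // -[i.+1%:R]natr1.
  by field; rewrite natr1 pnatr_eq0.
rewrite (eq_bigr _ (fun i _ => E i)) big_split /= (sum_rev (dd m.+1)) -hh_sum.
case: M E => [|M] _.
  by rewrite big_ord1 subnn mul0r mul0r addr0 hhS0 mulr0.
rewrite big_ord_recr /= subnn mul0r mul0r addr0.
rewrite (eq_bigr (fun i : 'I_M.+1 => m.+1%:R * (hh m (M - i) / i.+1%:R))); last first.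
  by move=> i _; rewrite -(subnSK (ltn_ord i)) IH mulrA.
rewrite -mulr_sumr.
have -> : \sum_(i < M.+1) hh m (M.+1 - i.+1) / i.+1%:R = \sum_(i < M.+1) hh m (M - i) / i.+1%:R.
  by apply: eq_bigr => i _; rewrite subSS.
have -> : hh m.+1 M.+1 = \sum_(i < M.+1) hh m (M - i) / i.+1%:R.
  by rewrite hhS; apply: eq_bigr => i _; rewrite subSS.
rewrite -[m.+2%:R]natr1.
ring.
Qed.

Lemma coef_id N i : ((N.+2) * 'C(N.+1, i) =
  N.+1 * 'C(N, i) + 'C(N, i) * i.+1 + (if i is i'.+1 then 'C(N, i') * i.+1 else 0))%N.
Proof.
case: i => [|i]; first by rewrite !bin0; lia.
rewrite binS.
have := mul_bin_left N i.
case: (leqP i N) => iN.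
  nia.
rewrite !bin_small //; [lia|lia].
Qed.

Lemma s_lt j : forall m, (j < m)%N -> stirling1 j m = 0.
Proof.
elim: j => [|j IH] [|m] //= jm.
by rewrite !IH ?mulr0 ?subr0 // ltnW.
Qed.

Lemma s_n0 n : stirling1 n.+1 0 = 0.
Proof. by elim: n => [|n IH] //; rewrite -[stirling1 n.+2 0]/(-(n.+1%:Z) * stirling1 n.+1 0) IH mulr0. Qed.

Definition FF m N : rat :=
  \sum_(i < N.+1) 'C(N, i)%:R * (stirling1 i.+1 m)%:~R / (i.+1)`!%:R.

Lemma FF_rec m N : (N.+2)%:R * FF m.+1 N.+1 = (N.+1)%:R * FF m.+1 N + FF m N.
Proof.
set b := fun i : nat => (stirling1 i.+1 m.+1)%:~R / (i.+1)`!%:R : rat.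
have Ha : forall i, (stirling1 i.+1 m)%:~R / (i.+1)`!%:R = (i.+2)%:R * b i.+1 + (i.+1)%:R * b i.
  move=> i; rewrite /b.
  have -> : stirling1 i.+2 m.+1 = stirling1 i.+1 m - (i.+1)%:Z * stirling1 i.+1 m.+1 by [].
  rewrite [(i.+2)`!]factS natrM rmorphB rmorphM /=.
  by field; rewrite pnatr_eq0 -lt0n fact_gt0 /= -natrD pnatr_eq0.
have Hb : forall i : nat, (stirling1 i.+1 m.+1)%:~R / (i.+1)`!%:R = b i by [].
rewrite /FF.
under eq_bigr do rewrite -mulrA Hb.
under [X in _ * X + _]eq_bigr do rewrite -mulrA Hb.
under [X in _ + X]eq_bigr do rewrite -mulrA Ha.
rewrite mulr_sumr.
have coefR : forall i : nat, N.+2%:R * ('C(N.+1,i)%:R * b i) =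
  (N.+1 * 'C(N,i))%:R * b i + ('C(N,i) * i.+1)%:R * b i +
  (if i is i'.+1 then 'C(N, i') * i.+1 else 0)%N%:R * b i.
  by move=> i; rewrite mulrA -!mulrDl -!natrD -natrM coef_id.
rewrite (eq_bigr _ (fun (i : 'I_N.+2) _ => coefR i)).
rewrite !big_split /=.
rewrite [X in X + _ + _ = _]big_ord_recr [X in _ + X + _ = _]big_ord_recr /=.
rewrite bin_small // muln0 mul0n !mul0r !addr0.
rewrite [X in _ + X = _]big_ord_recl /= mul0r add0r.
rewrite mulr_sumr -!big_split /=.
apply: eq_bigr => i _.
rewrite !natrM /bump /= add0n add1n.
clearbody b.
ring.
Qed.

Lemma g_rec m N : (N.+2)%:R * (dd m.+1 N.+2 / (m.+1)`!%:R)
   = (N.+1)%:R * (dd m.+1 N.+1 / (m.+1)`!%:R) + dd m N.+1 / m`!%:R.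
Proof.
rewrite !mulrA (deriv m N.+1) (deriv m N) factS natrM.
rewrite [dd m N.+1]/dd.
by field; rewrite pnatr_eq0 -lt0n fact_gt0 /= addrC natr1 pnatr_eq0.
Qed.

Lemma FF_g m N : FF m N = dd m N.+1 / m`!%:R.
Proof.
elim: m N => [|m IH] N.
  rewrite /FF big1; last by move=> i _; rewrite s_n0 mulr0 mul0r.
  by rewrite /dd hh0 subrr mul0r.
elim: N => [|N IHN].
  rewrite /FF big_ord1 dd_rec big_ord1 /= bin0 mul1r divr1.
  case: m {IH} => [|m] /=.
    by rewrite hh0 !divr1.
  by rewrite hhS0 !mul0r.
apply: (mulfI (x := (N.+2)%:R)); first by rewrite pnatr_eq0.
by rewrite FF_rec g_rec IHN IH.
Qed.

Lemma hh_step m n : hh m n.+1 = hh m n + dd m n.+1.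
Proof. by rewrite /dd addrC subrK. Qed.

Lemma harm0 : harm 0 = 0. Proof. by rewrite /harm big_geq. Qed.
Lemma harmS k : harm k.+1 = harm k + (k.+1)%:R^-1.
Proof. by rewrite /harm big_nat_recr. Qed.
Lemma harm20 : harm2 0 = 0. Proof. by rewrite /harm2 big_geq. Qed.
Lemma harm2S k : harm2 k.+1 = harm2 k + ((k.+1)%:R ^+ 2)^-1.
Proof. by rewrite /harm2 big_nat_recr. Qed.

Lemma conv m n : \sum_(k < n.+1) harm k * dd m (n - k) = hh m.+1 n.
Proof.
elim: n => [|n IH]; first by rewrite big_ord1 harm0 mul0r hhS0.
rewrite big_ord_recl harm0 mul0r add0r hh_step -IH dd_rec.
under eq_bigr do rewrite lift0 subSS harmS mulrDl.
rewrite big_split /=; congr (_ + _).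
by apply: eq_bigr => i _; rewrite mulrC.
Qed.

Lemma conv2 m n : (0 < m)%N ->
  \sum_(1 <= k < n.+1) harm k * dd m (n - k).+1 = hh m.+1 n.+1.
Proof.
move=> m0; rewrite -conv -(big_mkord xpredT (fun k => harm k * dd m (n.+1 - k))) big_ltn // harm0 mul0r add0r.
rewrite [RHS]big_nat_recr //= subnn.
case: m m0 => // m _.
rewrite /dd hhS0 mulr0 addr0.
by apply: eq_big_nat => k /andP[_ kn]; rewrite subSn.
Qed.

Lemma inner_FF m N : (0 < m)%N ->
  \sum_(m <= j < N.+2) ('C(N, j.-1)%:R * (stirling1 j m)%:~R / (j`!)%:R) = FF m N.
Proof.
move=> m0.
rewrite big_geq_mkord big_mkcond /=.
rewrite (eq_bigr (fun j : 'I_N.+2 => 'C(N, j.-1)%:R * (stirling1 j m)%:~R / (j`!)%:R : rat)); last first.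
  move=> j _; case: leqP => // jm.
  by rewrite s_lt // mulr0 mul0r.
rewrite -(big_mkord xpredT (fun j => 'C(N, j.-1)%:R * (stirling1 j m)%:~R / (j`!)%:R : rat)).
rewrite big_ltn // s_lt // mulr0 mul0r add0r big_add1 /= big_mkord.
by [].
Qed.

Lemma hh1 M : hh 1 M = harm M.
Proof.
elim: M => [|M IH]; first by rewrite hhS0 harm0.
rewrite hh_step IH harmS; congr (_ + _).
have := deriv 0 M; rewrite hh0 mulr1 => H.
apply: (mulfI (x := (M.+1)%:R)); first by rewrite pnatr_eq0.
by rewrite H mulfV // pnatr_eq0.
Qed.

Lemma hh2 M : hh 2 M = harm M ^+ 2 - harm2 M.
Proof.
elim: M => [|M IH]; first by rewrite hhS0 harm0 harm20 expr0n subrr.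
rewrite hh_step IH harmS harm2S.
have H := deriv 1 M; rewrite hh1 in H.
have -> : dd 2 M.+1 = 2%:R * harm M / (M.+1)%:R.
  apply: (mulfI (x := (M.+1)%:R)); first by rewrite pnatr_eq0.
  by rewrite H; field; rewrite addrC natr1 pnatr_eq0.
by field; rewrite addrC natr1 pnatr_eq0.
Qed.

Lemma dd1 t : dd 1 t.+1 = (t.+1)%:R^-1.
Proof.
have := deriv 0 t; rewrite hh0 mulr1 => H.
apply: (mulfI (x := (t.+1)%:R)); first by rewrite pnatr_eq0.
by rewrite H mulfV // pnatr_eq0.
Qed.

Theorem theorem7 (n : nat) : (0 < n)%N ->
  (forall m : nat, (0 < m)%N ->
     \sum_(1 <= k < n.+1)
        harm k * \sum_(m <= j < (n - k).+2)
          ('C(n - k, j.-1)%:R * (stirling1 j m)%:~R / (j`!)%:R)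
     = ((m`!)%:R)^-1 * mharm n.+1 m.+1)
  /\
  \sum_(1 <= k < n.+1) harm k / ((n - k).+1)%:R
     = harm n.+1 ^+ 2 - harm2 n.+1.
Proof.
move=> n0; split.
  move=> m m0.
  under eq_bigr do rewrite inner_FF // FF_g mulrA.
  rewrite -mulr_suml conv2 // -(mharm_hh n.+1 m.+1).
  by rewrite mulrC.
under eq_bigr do rewrite -dd1.
by rewrite conv2 // hh2.
Qed.
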